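(* Let $1<p<\infty$, $N\ge1$, $0\le R_1<R_2<\infty$, and let $f$ satisfy: $(f_{\mathrm{reg}})$ $f\in C([0,\infty))\cap C^1((0,\infty))$; $(f_{\mathrm{eq}})$ $f(0)=f(1)=0$, $f(s)<0$ for $0<s<1$, $f(s)>0$ for $s>1$; $(f_0)$ there exists $C_0\in[0,\infty)$ with $\lim_{s\to0^+}f(s)/s^{p-1}=-C_0$; $(f_1)$ there exists $C_1\in[0,\infty]$ with $\lim_{s\to1}\frac{f(s)}{|s-1|^{p-2}(s-1)}=C_1$. Define $\hat f(s)=f(s)$ for $s\ge0$ and $\hat f(s)=0$ for $s<0$, and $\varphi_p(s)=|s|^{p-2}s$. Let $u$ be a solution of $$-\big(r^{N-1}\varphi_p(u')\big)'=r^{N-1}\hat f(u)\ \text{in }(R_1,R_2),\qquad u'(R_1)=u'(R_2)=0.$$ Then either $u\equiv -C$ for some constant $C\ge0$, or $u(r)>0$ for every $r\in[R_1,R_2]$.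
   Context: A solution means a function $u$ such that $u$ and $r^{N-1}\varphi_p(u')$ belong to $C^1([R_1,R_2])$ and the equation holds pointwise, together with the boundary conditions. *)

(* Defs.v *)
From Stdlib Require Import Reals.
From Coquelicot Require Import Coquelicot.
Open Scope R_scope.

(* phi_p(s) = |s|^(p-2) s, with phi_p(0) = 0 (the continuous extension, p > 1). *)
Definition phi_p (p s : R) : R :=
  if Req_EM_T s 0 then 0 else Rpower (Rabs s) (p - 2) * s.

Definition fhat (f : R -> R) (s : R) : R :=
  if Rle_dec 0 s then f s else 0.

Definition cont_within (D : R -> Prop) (g : R -> R) (x : R) : Prop :=
  filterlim g (within D (locally x)) (locally (g x)).

Definition f_reg (f : R -> R) : Prop :=
  (forall x, 0 <= x -> cont_within (fun y => 0 <= y) f x) /\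
  (forall x, 0 < x -> ex_derive f x /\ continuous (Derive f) x).

Definition deriv_within_ab (a b : R) (g : R -> R) (x dg : R) : Prop :=
  filterlim (fun y => (g y - g x) / (y - x))
    (within (fun y => a <= y <= b /\ y <> x) (locally x)) (locally dg).

Definition C1_on (a b : R) (g dg : R -> R) : Prop :=
  forall x, a <= x <= b ->
    deriv_within_ab a b g x (dg x) /\ cont_within (fun y => a <= y <= b) dg x.

(* Main.v *)
Require Import Defs.
From Stdlib Require Import Reals Lra.
From Coquelicot Require Import Coquelicot.
Open Scope R_scope.

Lemma ballR (x e y : R) : ball x e y <-> Rabs (y - x) < e.
Proof. reflexivity. Qed.

Definition De a b (g : R -> R) x d := forall eps, 0 < eps -> exists δ, 0 < δ /\
  forall y, a <= y <= b -> y <> x -> Rabs (y - x) < δ -> Rabs ((g y - g x) / (y - x) - d) < eps.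
Definition Ce a b (g : R -> R) x := forall eps, 0 < eps -> exists δ, 0 < δ /\
  forall y, a <= y <= b -> Rabs (y - x) < δ -> Rabs (g y - g x) < eps.

Lemma d2c a b g x d : De a b g x d -> Ce a b g x.
Proof.
intros H eps He.
destruct (H 1 Rlt_0_1) as [d1 [Hd1 H1]].
assert (Hp : 0 < Rabs d + 1) by (pose proof (Rabs_pos d); lra).
exists (Rmin d1 (eps / (Rabs d + 1))); split.
{ apply Rmin_pos; [lra| apply Rdiv_lt_0_compat; lra]. }
intros y Hy Hyx.
destruct (Req_dec y x) as [->|Hne]. { rewrite Rminus_diag, Rabs_R0; lra. }
assert (Hl1 := Rmin_l d1 (eps / (Rabs d + 1))).
assert (Hl2 := Rmin_r d1 (eps / (Rabs d + 1))).
specialize (H1 y Hy Hne ltac:(lra)).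
set (q := (g y - g x) / (y - x)) in *.
assert (Hq : g y - g x = q * (y - x)) by (unfold q; field; lra).
rewrite Hq, Rabs_mult.
assert (Hqa : Rabs q < Rabs d + 1).
{ pose proof (Rabs_triang_inv q d). lra. }
assert (Hyxp : 0 <= Rabs (y - x)) by apply Rabs_pos.
assert (Rabs (y - x) < eps / (Rabs d + 1)) by lra.
assert (Rabs (y - x) * (Rabs d + 1) < eps).
{ apply (Rmult_lt_compat_r (Rabs d + 1)) in H0; [|lra].
  unfold Rdiv in H0. rewrite Rmult_assoc, Rinv_l in H0; lra. }
nra.
Qed.

Definition clamp a b x := Rmax a (Rmin x b).

Lemma clamp_in a b x : a <= b -> a <= clamp a b x <= b.
Proof. intros. unfold clamp, Rmax, Rmin. repeat destruct Rle_dec; lra. Qed.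
Lemma clamp_id a b x : a <= x <= b -> clamp a b x = x.
Proof. intros. unfold clamp, Rmax, Rmin. repeat destruct Rle_dec; lra. Qed.
Lemma clamp_lip a b x y : a <= b -> Rabs (clamp a b y - clamp a b x) <= Rabs (y - x).
Proof.
intros. unfold clamp, Rmax, Rmin. repeat destruct Rle_dec;
 unfold Rabs; repeat destruct Rcase_abs; lra.
Qed.

Lemma clamp_cont a b g : a <= b -> (forall x, a <= x <= b -> Ce a b g x) ->
  forall x, continuity_pt (fun t => g (clamp a b t)) x.
Proof.
intros hab H x. apply continuity_pt_locally. intros eps.
destruct (H (clamp a b x) (clamp_in a b x hab) eps (cond_pos eps)) as [d [Hd Hd']].
exists (mkposreal d Hd). intros y Hy. apply ballR in Hy; simpl in Hy.
apply Hd'. apply clamp_in; auto.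
pose proof (clamp_lip a b x y hab). assert (Rabs (y - x) < d) by exact Hy. lra.
Qed.

Lemma MVT_I R1 R2 g dg : R1 <= R2 -> (forall x, R1 <= x <= R2 -> De R1 R2 g x (dg x)) ->
  forall a b, R1 <= a -> a < b -> b <= R2 -> exists c, a < c < b /\ g b - g a = dg c * (b - a).
Proof.
intros h12 H a b ha hab hb.
set (G := fun t => g (clamp R1 R2 t)).
assert (hD : forall c, R1 < c < R2 -> derivable_pt_lim G c (dg c)).
{ intros c Hc eps He.
  destruct (H c ltac:(lra) eps He) as [d [Hd Hd']].
  assert (Hm : 0 < Rmin d (Rmin (c - R1) (R2 - c))).
  { apply Rmin_pos; [lra| apply Rmin_pos; lra]. }
  exists (mkposreal _ Hm). intros h hh0 hh. simpl in hh.
  assert (Hl1 := Rmin_l d (Rmin (c - R1) (R2 - c))).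
  assert (Hl2 := Rmin_r d (Rmin (c - R1) (R2 - c))).
  assert (Hl3 := Rmin_l (c - R1) (R2 - c)).
  assert (Hl4 := Rmin_r (c - R1) (R2 - c)).
  assert (Hh : - Rabs h <= h <= Rabs h) by (unfold Rabs; destruct Rcase_abs; lra).
  unfold G. rewrite !clamp_id by lra.
  specialize (Hd' (c + h) ltac:(lra) ltac:(lra)).
  replace (c + h - c) with h in Hd' by ring. apply Hd'. lra. }
assert (cG : forall x, continuity_pt G x).
{ apply clamp_cont; auto. intros x Hx. apply (d2c _ _ _ _ (dg x)). auto. }
pose (pr1 := fun c (P : a < c < b) => exist (fun l => derivable_pt_lim G c l) (dg c) (hD c ltac:(lra))).
destruct (MVT G id a b pr1 (fun c _ => derivable_pt_id c) hab (fun c _ => cG c)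
  (fun c _ => derivable_continuous_pt _ _ (derivable_pt_id c))) as [c [P Hc]].
rewrite (derive_pt_eq_0 _ _ _ _ (derivable_pt_lim_id c)) in Hc.
simpl in Hc. exists c; split; auto.
unfold G, id in Hc. rewrite !clamp_id in Hc by lra. lra.
Qed.
Lemma Rpower_pos x y : 0 < Rpower x y.
Proof. unfold Rpower; apply exp_pos. Qed.

Lemma phi_p0 p : phi_p p 0 = 0.
Proof. unfold phi_p. destruct Req_EM_T; lra. Qed.

Lemma phi_abs p x : x <> 0 -> Rabs (phi_p p x) = Rpower (Rabs x) (p - 1).
Proof.
intros hx. unfold phi_p. destruct Req_EM_T; [lra|].
rewrite Rabs_mult, (Rabs_pos_eq (Rpower _ _)) by (left; apply Rpower_pos).
assert (Ha : 0 < Rabs x) by (apply Rabs_pos_lt; auto).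
rewrite <- (Rpower_1 (Rabs x)) at 2 by auto.
rewrite <- Rpower_plus. f_equal. ring.
Qed.

Lemma gen_step (R1 R2 p K H : R) (N : nat) (v du w dw : R -> R)
 (hp : 1 < p) (hR1 : 0 <= R1) (hK : 0 <= K) (hH : 0 < H)
 (hsmall : 2 ^ (N-1) * K * Rpower H p < 1)
 (mvt_v : forall a b, R1 <= a -> a < b -> b <= R2 -> exists c, a < c < b /\ v b - v a = du c * (b - a))
 (mvt_w : forall a b, R1 <= a -> a < b -> b <= R2 -> exists c, a < c < b /\ w b - w a = dw c * (b - a))
 (wdef : forall r, R1 <= r <= R2 -> w r = r ^ (N-1) * phi_p p (du r))
 (hdw : forall r M, R1 < r < R2 -> 0 < M -> 0 <= v r <= M -> Rabs (dw r) <= r ^ (N-1) * (K * Rpower M (p-1)))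
 (vnn : forall r, R1 <= r <= R2 -> 0 <= v r)
 (vmax : forall a c, R1 <= a <= c -> c <= R2 -> exists rs, a <= rs <= c /\ forall r, a <= r <= c -> v r <= v rs)
 a b c z (hac: R1 <= a <= c) (hc : c <= R2) (hH' : c - a <= H) (hz : a <= z <= c) (vz : v z = 0)
 (hb : a <= b <= c) (wb : w b = 0) (hbc : b = a \/ c <= 2 * a) :
 forall r, a <= r <= c -> v r = 0.
Proof.
intros r Hr. destruct (vmax a c hac hc) as [rs [Hrs Hmax]].
set (M := v rs) in *.
assert (H0 : 0 <= v r) by (apply vnn; lra).
assert (H1 : v r <= M) by (apply Hmax; lra).
destruct (Rle_lt_dec M 0) as [HM|HM]; [lra|]. exfalso.
assert (Hxi : exists xi, a < xi < c /\ M <= Rabs (du xi) * H).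
{ destruct (Rtotal_order rs z) as [lt|[eq|gt]].
  - destruct (mvt_v rs z ltac:(lra) lt ltac:(lra)) as [c0 [Hc0 E]].
    exists c0; split; [lra|].
    pose proof (Rle_abs (- du c0)). rewrite Rabs_Ropp in *.
    assert (M = - du c0 * (z - rs)) by (unfold M; lra).
    pose proof (Rabs_pos (du c0)). nra.
  - subst. unfold M in HM. lra.
  - destruct (mvt_v z rs ltac:(lra) gt ltac:(lra)) as [c0 [Hc0 E]].
    exists c0; split; [lra|].
    pose proof (Rle_abs (du c0)).
    assert (M = du c0 * (rs - z)) by (unfold M; lra).
    pose proof (Rabs_pos (du c0)). nra. }
destruct Hxi as [xi [Hxi Hdu]].
assert (Hxi0 : 0 < xi) by lra.
assert (Hdu0 : du xi <> 0).
{ intro E. rewrite E, Rabs_R0 in Hdu. lra. }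
assert (Heta : exists eta, a < eta < c /\ eta <= 2 * xi /\ Rabs (w xi) <= Rabs (dw eta) * H).
{ destruct (Rtotal_order b xi) as [lt|[eq|gt]].
  - destruct (mvt_w b xi ltac:(lra) lt ltac:(lra)) as [e [He E]].
    exists e; split; [lra|split; [lra|]].
    assert (w xi = dw e * (xi - b)) by lra. rewrite H2, Rabs_mult.
    rewrite (Rabs_pos_eq (xi - b)) by lra.
    apply Rmult_le_compat_l; [apply Rabs_pos|lra].
  - exists xi; split; [lra|split; [lra|]].
    rewrite <- eq, wb, Rabs_R0. apply Rmult_le_pos; [apply Rabs_pos|lra].
  - destruct (mvt_w xi b ltac:(lra) gt ltac:(lra)) as [e [He E]].
    exists e; split; [lra|split].
    + destruct hbc; lra.
    + assert (w xi = - (dw e * (b - xi))) by lra. rewrite H2, Rabs_Ropp, Rabs_mult.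
      rewrite (Rabs_pos_eq (b - xi)) by lra.
      apply Rmult_le_compat_l; [apply Rabs_pos|lra]. }
destruct Heta as [eta [Heta1 [Heta2 Hw]]].
assert (Hdweta := hdw eta M ltac:(lra) HM ltac:(split; [apply vnn; lra| apply Hmax; lra])).
set (Mp := Rpower M (p - 1)) in *.
set (P := Rpower (Rabs (du xi)) (p - 1)).
set (X := xi ^ (N - 1)).
assert (HX : 0 < X) by (apply pow_lt; lra).
assert (Hwx : Rabs (w xi) = X * P).
{ rewrite wdef by lra. rewrite Rabs_mult, phi_abs by auto.
  rewrite Rabs_pos_eq; [reflexivity|]. left; auto. }
assert (Heta_pow : eta ^ (N - 1) <= 2 ^ (N - 1) * X).
{ unfold X. rewrite <- Rpow_mult_distr. apply pow_incr. lra. }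
assert (HMp : 0 < Mp) by apply Rpower_pos.
assert (HKMp : 0 <= K * Mp) by (apply Rmult_le_pos; lra).
assert (HP : X * P <= 2 ^ (N - 1) * X * (K * Mp) * H).
{ rewrite <- Hwx. eapply Rle_trans; [exact Hw|].
  apply Rmult_le_compat_r; [lra|].
  eapply Rle_trans; [exact Hdweta|].
  apply Rmult_le_compat_r; auto. }
assert (HP2 : P <= 2 ^ (N - 1) * (K * Mp) * H).
{ apply (Rmult_le_reg_l X); auto. lra. }
assert (HlowP : Rpower (M / H) (p - 1) <= P).
{ apply Rle_Rpower_l; [lra|]. split; [apply Rdiv_lt_0_compat; lra|].
  apply (Rmult_le_reg_r H); auto. unfold Rdiv. rewrite Rmult_assoc, Rinv_l; lra. }
assert (HMsplit : Mp = Rpower (M / H) (p - 1) * Rpower H (p - 1)).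
{ unfold Mp. rewrite Rpower_mult_distr; [|apply Rdiv_lt_0_compat; lra|lra].
  f_equal. field. lra. }
assert (HHp : Rpower H (p - 1) * H = Rpower H p).
{ rewrite <- (Rpower_1 H) at 2 by auto. rewrite <- Rpower_plus. f_equal; ring. }
assert (HHp0 : 0 < Rpower H (p - 1)) by apply Rpower_pos.
assert (Mp <= P * Rpower H (p - 1)).
{ rewrite HMsplit. apply Rmult_le_compat_r; lra. }
assert (Mp <= 2 ^ (N - 1) * K * Rpower H p * Mp).
{ rewrite <- HHp. eapply Rle_trans; [eassumption|].
  assert (P * Rpower H (p - 1) <= 2 ^ (N - 1) * (K * Mp) * H * Rpower H (p - 1))
    by (apply Rmult_le_compat_r; lra).
  lra. }
nra.
Qed.
Lemma fbound (p : R) (f : R -> R) (hp : 1 < p) (hfreg : f_reg f)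
  (hfC0 : exists C0 : R, 0 <= C0 /\
      filterlim (fun s => f s / Rpower s (p - 1)) (at_right 0) (locally (- C0))) :
  forall S, 0 < S -> exists K, 0 <= K /\ forall s, 0 < s <= S -> Rabs (f s) <= K * Rpower s (p - 1).
Proof.
intros S HS.
destruct hfC0 as [C0 [hC0 Hlim]].
destruct (proj1 (filterlim_locally _ _) Hlim (mkposreal 1 Rlt_0_1)) as [δ Hδ].
assert (Hd := cond_pos δ).
set (d := Rmin (δ / 2) S).
assert (Hd0 : 0 < d) by (apply Rmin_pos; lra).
assert (Hd1 : d <= δ / 2) by apply Rmin_l.
assert (Hd2 : d <= S) by apply Rmin_r.
assert (Hc : forall c, d <= c <= S -> continuity_pt f c).
{ intros c Hc. apply continuity_pt_filterlim.
  apply (@ex_derive_continuous R_AbsRing R_NormedModule). apply (proj2 hfreg c). lra. }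
destruct (continuity_ab_maj f d S Hd2 Hc) as [x1 [Hx1 _]].
destruct (continuity_ab_min f d S Hd2 Hc) as [x2 [Hx2 _]].
set (B := Rmax (Rabs (f x1)) (Rabs (f x2))).
assert (HB0 : 0 <= B) by (eapply Rle_trans; [apply Rabs_pos| apply Rmax_l]).
assert (HB : forall s, d <= s <= S -> Rabs (f s) <= B).
{ intros s Hs. specialize (Hx1 s Hs). specialize (Hx2 s Hs).
  pose proof (Rmax_l (Rabs (f x1)) (Rabs (f x2))).
  pose proof (Rmax_r (Rabs (f x1)) (Rabs (f x2))). fold B in H, H0.
  unfold Rabs in *; repeat destruct Rcase_abs; lra. }
assert (Hpd : 0 < Rpower d (p - 1)) by apply Rpower_pos.
exists (C0 + 1 + B / Rpower d (p - 1)). split.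
{ assert (0 <= B / Rpower d (p - 1)) by (apply Rdiv_le_0_compat; lra). lra. }
intros s Hs.
assert (Hps : 0 < Rpower s (p - 1)) by apply Rpower_pos.
assert (HBd : 0 <= B / Rpower d (p - 1)) by (apply Rdiv_le_0_compat; lra).
destruct (Rlt_le_dec s d) as [Hsd|Hsd].
- assert (Hb : ball 0 δ s) by (apply ballR; rewrite Rminus_0_r, Rabs_pos_eq; lra).
  specialize (Hδ s Hb ltac:(lra)). apply ballR in Hδ. simpl in Hδ.
  set (q := f s / Rpower s (p - 1)) in Hδ.
  assert (Hq : f s = q * Rpower s (p - 1)) by (unfold q; field; lra).
  rewrite Hq, Rabs_mult, (Rabs_pos_eq (Rpower s _)) by lra.
  assert (Rabs q <= C0 + 1).
  { change (Rabs (q - - C0) < 1) in Hδ.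
    unfold Rabs in *; repeat destruct Rcase_abs; lra. }
  assert (0 <= B / Rpower d (p - 1) * Rpower s (p - 1)) by (apply Rmult_le_pos; lra).
  assert (Rabs q * Rpower s (p - 1) <= (C0 + 1) * Rpower s (p - 1)) by (apply Rmult_le_compat_r; lra).
  lra.
- assert (Rpower d (p - 1) <= Rpower s (p - 1)) by (apply Rle_Rpower_l; lra).
  assert (B = B / Rpower d (p - 1) * Rpower d (p - 1)) by (field; lra).
  assert (B / Rpower d (p - 1) * Rpower d (p - 1) <= B / Rpower d (p - 1) * Rpower s (p - 1))
    by (apply Rmult_le_compat_l; lra).
  assert ((C0 + 1) * Rpower s (p - 1) >= 0) by nra.
  specialize (HB s ltac:(lra)). lra.
Qed.

Lemma min_d0 R1 R2 (u : R -> R) d z : R1 < z < R2 -> De R1 R2 u z d ->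
  (forall r, R1 <= r <= R2 -> u z <= u r) -> d = 0.
Proof.
intros Hz HD Hmin.
destruct (Req_dec d 0) as [|Hd]; auto. exfalso.
assert (Ha : 0 < Rabs d) by (apply Rabs_pos_lt; auto).
destruct (HD _ Ha) as [δ [Hδ Hδ']].
set (t := Rmin (δ / 2) (Rmin ((z - R1) / 2) ((R2 - z) / 2))).
assert (Ht0 : 0 < t) by (apply Rmin_pos; [lra| apply Rmin_pos; lra]).
assert (Ht1 := Rmin_l (δ / 2) (Rmin ((z - R1) / 2) ((R2 - z) / 2))).
assert (Ht2 := Rmin_r (δ / 2) (Rmin ((z - R1) / 2) ((R2 - z) / 2))).
assert (Ht3 := Rmin_l ((z - R1) / 2) ((R2 - z) / 2)).
assert (Ht4 := Rmin_r ((z - R1) / 2) ((R2 - z) / 2)).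
fold t in Ht1, Ht2.
assert (E1 := Hδ' (z + t) ltac:(lra) ltac:(lra) ltac:(replace (z + t - z) with t by ring; rewrite Rabs_pos_eq; lra)).
assert (E2 := Hδ' (z - t) ltac:(lra) ltac:(lra) ltac:(replace (z - t - z) with (- t) by ring; rewrite Rabs_Ropp, Rabs_pos_eq; lra)).
replace (z + t - z) with t in E1 by ring.
replace (z - t - z) with (- t) in E2 by ring.
assert (Q1 : 0 <= (u (z + t) - u z) / t).
{ apply Rdiv_le_0_compat; [|lra]. assert (u z <= u (z + t)) by (apply Hmin; lra). lra. }
assert (Q2 : (u (z - t) - u z) / - t <= 0).
{ replace ((u (z - t) - u z) / - t) with (- ((u (z - t) - u z) / t)) by (field; lra).
  assert (0 <= (u (z - t) - u z) / t); [|lra].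
  apply Rdiv_le_0_compat; [|lra]. assert (u z <= u (z - t)) by (apply Hmin; lra). lra. }
revert E1 E2 Q1 Q2.
generalize ((u (z + t) - u z) / t) ((u (z - t) - u z) / - t). intros q1 q2.
unfold Rabs; repeat destruct Rcase_abs; lra.
Qed.

Lemma dw_De a b g x d : deriv_within_ab a b g x d -> De a b g x d.
Proof.
intros H eps He.
destruct (proj1 (filterlim_locally _ _) H (mkposreal eps He)) as [δ Hδ].
exists δ; split; [apply cond_pos|].
intros y Hy Hyx Hd. apply (Hδ y); [exact Hd| split; assumption].
Qed.

Theorem lemma2p1
  (p : R) (N : nat) (R1 R2 : R) (f : R -> R)
  (hp : 1 < p) (hN : (1 <= N)%nat) (hR1 : 0 <= R1) (hR12 : R1 < R2)
  (* (f_reg) *)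
  (hfreg : f_reg f)
  (* (f_eq) *)
  (hf0 : f 0 = 0) (hf1 : f 1 = 0)
  (hfneg : forall s, 0 < s < 1 -> f s < 0)
  (hfpos : forall s, 1 < s -> 0 < f s)
  (* (f_0) *)
  (hfC0 : exists C0 : R, 0 <= C0 /\
      filterlim (fun s => f s / Rpower s (p - 1)) (at_right 0) (locally (- C0)))
  (* (f_1) *)
  (hfC1 : exists C1 : Rbar, Rbar_le (Finite 0) C1 /\
      is_lim (fun s => f s / phi_p p (s - 1)) 1 C1)
  (* u is a solution: u, w := r^(N-1) phi_p(u') in C^1([R1,R2]) *)
  (u du dw : R -> R)
  (hu : C1_on R1 R2 u du)
  (hw : C1_on R1 R2 (fun r => r ^ (N - 1) * phi_p p (du r)) dw)
  (heq : forall r, R1 < r < R2 -> - dw r = r ^ (N - 1) * fhat f (u r))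
  (hbc1 : du R1 = 0) (hbc2 : du R2 = 0) :
  (exists C : R, 0 <= C /\ forall r, R1 <= r <= R2 -> u r = - C) \/
  (forall r, R1 <= r <= R2 -> 0 < u r).
Proof.
assert (h12 : R1 <= R2) by lra.
set (W := fun r => r ^ (N - 1) * phi_p p (du r)).
assert (huD : forall x, R1 <= x <= R2 -> De R1 R2 u x (du x)).
{ intros x Hx. apply dw_De. apply (proj1 (hu x Hx)). }
assert (hwD : forall x, R1 <= x <= R2 -> De R1 R2 W x (dw x)).
{ intros x Hx. apply dw_De. apply (proj1 (hw x Hx)). }
assert (mvt_u := MVT_I R1 R2 u du h12 huD).
assert (mvt_w := MVT_I R1 R2 W dw h12 hwD).
assert (cu := clamp_cont R1 R2 u h12 (fun x Hx => d2c _ _ _ _ _ (huD x Hx))).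
set (U := fun t => u (clamp R1 R2 t)) in cu.
assert (HU : forall x, R1 <= x <= R2 -> U x = u x).
{ intros x Hx. unfold U. rewrite clamp_id; auto. }
destruct (continuity_ab_min U R1 R2 h12 (fun c _ => cu c)) as [r0 [Hmin Hr0]].
destruct (continuity_ab_maj U R1 R2 h12 (fun c _ => cu c)) as [r1 [Hmax Hr1]].
rewrite HU in Hmin, Hmax by auto.
set (m := u r0) in *.
assert (Hmin' : forall r, R1 <= r <= R2 -> m <= u r).
{ intros r Hr. rewrite <- HU by auto. auto. }
assert (Hmax' : forall r, R1 <= r <= R2 -> u r <= u r1).
{ intros r Hr. rewrite <- HU by auto. auto. }
destruct (Rlt_le_dec 0 m) as [Hm|Hm].
{ right. intros r Hr. specialize (Hmin' r Hr). lra. }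
left. exists (- m). split; [lra|].
destruct (fbound p f hp hfreg hfC0 (Rabs (u r1) + 1) ltac:(pose proof (Rabs_pos (u r1)); lra))
  as [K [HK HKb]].
set (A := 2 ^ (N - 1)).
assert (HA : 0 < A) by (apply pow_lt; lra).
set (H := / (A * K + 2)).
assert (HAK : 0 <= A * K) by (apply Rmult_le_pos; lra).
assert (HH0 : 0 < H) by (apply Rinv_0_lt_compat; lra).
assert (HH1 : H < 1).
{ unfold H. rewrite <- Rinv_1. apply Rinv_lt_contravar; lra. }
assert (HHp : Rpower H p < H).
{ rewrite <- (Rpower_1 H) at 2 by auto. unfold Rpower. apply exp_increasing.
  assert (ln H < 0) by (rewrite <- ln_1; apply ln_increasing; lra). nra. }
assert (hsmall : A * K * Rpower H p < 1).
{ assert (HpH : 0 < Rpower H p) by apply Rpower_pos.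
  assert (A * K * Rpower H p <= A * K * H) by (apply Rmult_le_compat_l; lra).
  assert (A * K * H < 1); [|lra].
  unfold H. apply (Rmult_lt_reg_r (A * K + 2)); [lra|].
  rewrite Rmult_assoc, Rinv_l by lra. lra. }
set (v := fun r => u r - m).
assert (mvt_v : forall a b, R1 <= a -> a < b -> b <= R2 -> exists c, a < c < b /\ v b - v a = du c * (b - a)).
{ intros a b ha hab hb. destruct (mvt_u a b ha hab hb) as [c [Hc E]]. exists c; split; auto.
  unfold v; lra. }
assert (wdef : forall r, R1 <= r <= R2 -> W r = r ^ (N-1) * phi_p p (du r)) by reflexivity.
assert (hdw : forall r M, R1 < r < R2 -> 0 < M -> 0 <= v r <= M ->
          Rabs (dw r) <= r ^ (N-1) * (K * Rpower M (p-1))).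
{ intros r M Hr HM Hv.
  assert (E : dw r = - (r ^ (N - 1) * fhat f (u r))) by (rewrite <- heq; [ring|auto]).
  rewrite E, Rabs_Ropp, Rabs_mult, (Rabs_pos_eq (r ^ _)) by (apply pow_le; lra).
  apply Rmult_le_compat_l; [apply pow_le; lra|].
  assert (HMp : 0 < Rpower M (p - 1)) by apply Rpower_pos.
  unfold fhat. destruct (Rle_dec 0 (u r)) as [Hur|Hur].
  - destruct (Req_dec (u r) 0) as [Hz|Hz].
    + rewrite Hz, hf0, Rabs_R0. apply Rmult_le_pos; lra.
    + assert (Hur1 : u r <= u r1) by (apply Hmax'; lra).
      pose proof (Rle_abs (u r1)).
      eapply Rle_trans; [apply HKb; lra|].
      apply Rmult_le_compat_l; auto.
      apply Rle_Rpower_l; [lra|]. unfold v in Hv. lra.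
  - rewrite Rabs_R0. apply Rmult_le_pos; lra. }
assert (vnn : forall r, R1 <= r <= R2 -> 0 <= v r).
{ intros r Hr. unfold v. specialize (Hmin' r Hr). lra. }
assert (vmax : forall a c, R1 <= a <= c -> c <= R2 -> exists rs, a <= rs <= c /\ forall r, a <= r <= c -> v r <= v rs).
{ intros a c Hac Hc. destruct (continuity_ab_maj U a c ltac:(lra) (fun c _ => cu c)) as [rs [Hrs' Hrs]].
  exists rs; split; auto. intros r Hr. specialize (Hrs' r Hr).
  rewrite !HU in Hrs' by lra. unfold v; lra. }
assert (zeroW : forall z, R1 <= z <= R2 -> v z = 0 -> W z = 0).
{ intros z Hz Hvz. unfold W.
  assert (du z = 0).
  { destruct (Req_dec z R1) as [->|H1]; auto.
    destruct (Req_dec z R2) as [->|H2]; auto.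
    apply (min_d0 R1 R2 u (du z) z); [lra| apply huD; auto|].
    intros r Hr. unfold v in Hvz. specialize (Hmin' r Hr). lra. }
  rewrite H0, phi_p0. ring. }
assert (WR1 : W R1 = 0) by (unfold W; rewrite hbc1, phi_p0; ring).
assert (step := gen_step R1 R2 p K H N v du W dw hp hR1 HK HH0 hsmall mvt_v mvt_w wdef hdw vnn vmax).
assert (Hit : forall n : nat, forall r, R1 <= r <= R2 -> Rabs (r - r0) <= INR n * (H / 2) -> v r = 0).
{ induction n as [|n IH].
  - intros r Hr Hd. simpl in Hd. rewrite Rmult_0_l in Hd.
    assert (r = r0) by (pose proof (Rabs_pos (r - r0)); unfold Rabs in Hd; destruct Rcase_abs; lra).
    subst r. unfold v, m. ring.
  - intros r Hr Hd. rewrite S_INR in Hd.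
    assert (Hn := pos_INR n).
    destruct (Rle_dec (Rabs (r - r0)) (INR n * (H / 2))) as [Hle|Hgt]; [apply IH; auto|].
    assert (Hnh : 0 <= INR n * (H / 2)) by (apply Rmult_le_pos; lra).
    destruct (Rle_lt_dec r r0) as [Hl|Hr'].
    +
      rewrite Rabs_left1 in Hgt, Hd by lra.
      remember (r0 - INR n * (H / 2)) as z eqn:Hz.
      assert (Hvz : v z = 0) by (apply IH; [lra| rewrite Rabs_left1; lra]).
      destruct (Rle_lt_dec (z - R1) H) as [Hc|Hc].
      * apply (step R1 R1 z z); first [assumption | lra].
      * apply (step (z - H / 2) z z z);
          first [assumption | lra | (apply zeroW; [lra|assumption]) | (right; lra)].
    + rewrite Rabs_right in Hgt, Hd by lra.
      remember (r0 + INR n * (H / 2)) as z eqn:Hz.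
      assert (Hvz : v z = 0) by (apply IH; [lra| rewrite Rabs_right; lra]).
      assert (Hm1 := Rmin_l (z + H) R2). assert (Hm2 := Rmin_r (z + H) R2).
      apply (step z z (Rmin (z + H) R2) z);
        first [assumption | lra | (apply zeroW; [lra|assumption]) | (left; reflexivity)
              | (split; [lra| apply Rmin_glb; lra]) ]. }
destruct (INR_unbounded ((R2 - R1) / (H / 2))) as [n Hn].
intros r Hr.
assert (Hv : v r = 0).
{ apply (Hit n); auto.
  assert (INR n * (H / 2) > R2 - R1).
  { apply (Rmult_lt_compat_r (H / 2)) in Hn; [|lra].
    unfold Rdiv at 1 in Hn. rewrite Rmult_assoc, Rinv_l in Hn by lra. lra. }
  unfold Rabs; destruct Rcase_abs; lra. }
unfold v in Hv. lra.
Qed.
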